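(* Let $\mathcal{C}$ be a robust graph class (not necessarily hereditary) for which $\beta_{\mathcal{C}}$ is finite. For every integer $d\ge1$, $$\beta_{\mathcal{C}}(d)\ge\begin{cases}2^{d-1}+1 & \text{if } \beta_{\mathcal{C}}=1,\\ (\beta_{\mathcal{C}}-1)\,2^{d}+1 & \text{if } \beta_{\mathcal{C}}\ge 2.\end{cases}$$
   Context: $\mathrm{OPT}(G)$ is the minimum vertex cover size. $Y\subseteq V(G)$ is a blocking set of $G$ if no vertex cover of $G$ of size $\mathrm{OPT}(G)$ contains $Y$; minimal if no proper subset is a blocking set. $\beta(G)$ is the maximum size of a minimal blocking set of $G$; $\beta_{\mathcal{C}}=\sup_{G\in\mathcal{C}}\beta(G)$. Elimination distance: $\mathrm{ed}_{\mathcal{C}}(G)=0$ if $G\in\mathcal{C}$; otherwise if $G$ is connected, $\mathrm{ed}_{\mathcal{C}}(G)=1+\min_{v}\mathrm{ed}_{\mathcal{C}}(G-v)$; otherwise the maximum over connected components. $\beta_{\mathcal{C}}(d)=\max\{\beta(G):\mathrm{ed}_{\mathcal{C}}(G)\le d\}$. A class is robust if a graph is in it iff all its connected components are. *)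

(* Defs.v *)
From mathcomp Require Import all_boot.
Set Implicit Arguments. Unset Strict Implicit. Unset Printing Implicit Defensive.

Record sgraph := SGraph {
  vert :> finType;
  adj : rel vert;
  adj_sym : symmetric adj;
  adj_irr : irreflexive adj }.

Section Induced.
Variables (G : sgraph) (A : {set vert G}).
Definition ind_vert : finType := {x : vert G | x \in A}.
Definition ind_adj : rel ind_vert := fun x y => adj (val x) (val y).
Lemma ind_adj_sym : symmetric ind_adj.
Proof. by move=> x y; rewrite /ind_adj adj_sym. Qed.
Lemma ind_adj_irr : irreflexive ind_adj.
Proof. by move=> x; rewrite /ind_adj adj_irr. Qed.
Definition induced : sgraph := SGraph ind_adj_sym ind_adj_irr.
End Induced.

Definition delv (G : sgraph) (v : vert G) : sgraph := induced [set~ v].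

Definition component (G : sgraph) (x : vert G) : sgraph :=
  induced [set y | connect (@adj G) x y].

Definition isomorphic (G H : sgraph) : Prop :=
  exists f : vert G -> vert H, bijective f /\
    forall x y, adj (f x) (f y) = adj x y.

Definition graph_class := sgraph -> Prop.
Definition iso_closed (C : graph_class) : Prop :=
  forall G H, isomorphic G H -> C G -> C H.

Definition robust (C : graph_class) : Prop :=
  forall G : sgraph, C G <-> (forall x : vert G, C (component x)).

Definition vertex_cover (G : sgraph) (S : {set vert G}) : Prop :=
  forall x y : vert G, adj x y -> (x \in S) || (y \in S).
Definition min_vertex_cover (G : sgraph) (S : {set vert G}) : Prop :=
  vertex_cover S /\ forall S' : {set vert G}, vertex_cover S' -> #|S| <= #|S'|.

Definition blocking (G : sgraph) (Y : {set vert G}) : Prop :=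
  forall S : {set vert G}, min_vertex_cover S -> ~ (Y \subset S).
Definition minimal_blocking (G : sgraph) (Y : {set vert G}) : Prop :=
  blocking Y /\ forall Z : {set vert G}, Z \proper Y -> ~ blocking Z.

(* beta_C = k (a finite value, attained): every minimal blocking set of a
   graph of C has size <= k, and some graph of C has one of size k. *)
Definition beta_class_eq (C : graph_class) (k : nat) : Prop :=
  (forall G, C G -> forall Y : {set vert G}, minimal_blocking Y -> #|Y| <= k)
  /\ (exists G, C G /\ exists Y : {set vert G}, minimal_blocking Y /\ #|Y| = k).

(* ed_le C d G  <->  ed_C(G) <= d.
   ed_C(G) = 0 if G in C; for connected G not in C, 1 + min_v ed_C(G - v);
   otherwise the max over connected components (each component is connected,
   so its value is given by one of the first two clauses). *)
Fixpoint ed_le (C : graph_class) (d : nat) (G : sgraph) : Prop :=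
  C G \/
  forall x : vert G,
    C (component x) \/
    match d with
    | 0 => False
    | d'.+1 => exists v : vert (component x), ed_le C d' (delv v)
    end.

(* Main.v *)
Require Import Defs.
From mathcomp Require Import all_boot.
From Stdlib Require Import Classical.
Set Implicit Arguments. Unset Strict Implicit. Unset Printing Implicit Defensive.

Lemma connect_ind' (T : finType) (e : rel T) (x : T) (P : T -> Prop) :
  P x -> (forall a b, connect e x a -> P a -> e a b -> P b) ->
  forall a, connect e x a -> P a.
Proof.
move=> Px step a /connectP [p pth ->].
suff H: forall p z, connect e x z -> P z -> path e z p -> P (last z p).
  by apply: H => //; exact: connect0.
elim=> [//|b q IH] z cz Pz /= /andP[ezb pb].
apply: (IH b) => //; first exact: connect_trans cz (connect1 ezb).
exact: step ezb.
Qed.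

Lemma iso_sym (G H : sgraph) : isomorphic G H -> isomorphic H G.
Proof.
case=> f [[g fK gK] fadj]; exists g; split; first by exists f.
by move=> x y; rewrite -fadj !gK.
Qed.

Lemma induced_iso (G H : sgraph) (S : {set G}) (T : {set H}) (f : G -> H) :
  (forall a, a \in S -> f a \in T) ->
  {in S &, injective f} ->
  (forall b, b \in T -> exists2 a, a \in S & f a = b) ->
  {in S &, forall a b, adj (f a) (f b) = adj a b} ->
  isomorphic (induced S) (induced T).
Proof.
move=> fST finj fsurj fadj.
pose F (z : induced S) : induced T := exist _ (f (val z)) (fST _ (valP z)).
have [g gK] : exists g : induced T -> induced S, forall t, F (g t) = t.
  apply: (@fin_all_exists _ (fun _ => induced S) (fun t a => F a = t)) => t. have [a aS fa] := fsurj _ (valP t).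
  exists (exist (fun x => x \in S) a aS). by apply: val_inj.
exists F; split.
  exists g => // z. apply: val_inj. apply: finj; [exact: valP | exact: valP |].
  by have := congr1 val (gK (F z)).
by move=> x y /=; rewrite /ind_adj /= fadj //; exact: valP.
Qed.

Lemma comp_embed (K M : sgraph) (f : K -> M) (y : K) :
  (forall a b, connect (@adj K) y a -> connect (@adj K) y b -> f a = f b -> a = b) ->
  (forall a b, connect (@adj K) y a -> connect (@adj K) y b -> adj (f a) (f b) = adj a b) ->
  (forall a b, connect (@adj K) y a -> adj (f a) b -> exists2 a', adj a a' & b = f a') ->
  isomorphic (component y) (component (f y)).
Proof.
move=> E1 E2 E3; apply: induced_iso.
- move=> a; rewrite !inE.
  apply: (@connect_ind' _ _ y (fun a => connect (@adj M) (f y) (f a))) => //.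
  move=> a0 b cya Pa eab; apply: (connect_trans Pa); apply: connect1.
  by rewrite E2 // (connect_trans cya (connect1 eab)).
- by move=> a b; rewrite !inE; exact: E1.
- move=> b; rewrite inE.
  apply: (@connect_ind' _ _ (f y) (fun b => exists2 a, a \in [set x | connect (@adj K) y x] & f a = b)).
    by exists y; rewrite // inE connect0.
  move=> a0 b0 _ [a1 ca1 <-] eab; rewrite inE in ca1.
  have [a' aa' ->] := E3 _ _ ca1 eab.
  by exists a'; rewrite // inE (connect_trans ca1 (connect1 aa')).
- by move=> a b; rewrite !inE; exact: E2.
Qed.

Lemma delv_iso (A B : sgraph) (h : A -> B) (u : A) :
  bijective h -> (forall x y, adj (h x) (h y) = adj x y) ->
  isomorphic (delv u) (delv (h u)).
Proof.
move=> hb hadj; apply: (@induced_iso _ _ _ _ h).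
- by move=> a; rewrite !in_setC1 (bij_eq hb).
- by move=> a b _ _; apply: bij_inj.
- move=> b; rewrite in_setC1 => bu; case: hb => g hK gK.
  exists (g b); last by rewrite gK.
  rewrite in_setC1; apply: contra bu => /eqP <-; by rewrite gK.
- by move=> ? ? _ _.
Qed.

Lemma iso_comp (A B : sgraph) (h : A -> B) (y : A) :
  bijective h -> (forall x y, adj (h x) (h y) = adj x y) ->
  isomorphic (component y) (component (h y)).
Proof.
move=> hb hadj; apply: comp_embed.
- by move=> a b _ _; apply: bij_inj.
- by move=> a b _ _.
- move=> a b _ ab; case: hb => g hK gK; exists (g b); last by rewrite gK.
  by rewrite -hadj gK.
Qed.

Definition clause (C : graph_class) (d : nat) (G : sgraph) (x : G) : Prop :=
  C (component x) \/
  match d with 0 => False | d'.+1 => exists v : component x, ed_le C d' (delv v) end.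

Lemma ed_leE C d G : ed_le C d G <-> C G \/ forall x : G, clause C d x.
Proof. by case: d. Qed.

Lemma clause_iso C d (K M : sgraph) (x : K) (x' : M) :
  iso_closed C ->
  (forall d', d = d'.+1 -> forall A B, isomorphic A B -> ed_le C d' A -> ed_le C d' B) ->
  isomorphic (component x) (component x') -> clause C d x -> clause C d x'.
Proof.
move=> isoC IH hiso [Cx|]; first by left; exact: isoC Cx.
case: d IH => // d IH [u edu]; right.
case: hiso => h [hb hadj]. exists (h u). apply: (IH d erefl _ _ _ edu).
exact: delv_iso.
Qed.

Lemma ed_iso_step C d : iso_closed C ->
  (forall d', d = d'.+1 -> forall A B, isomorphic A B -> ed_le C d' A -> ed_le C d' B) ->
  forall A B, isomorphic A B -> ed_le C d A -> ed_le C d B.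
Proof.
move=> isoC IH A B hAB; rewrite !ed_leE; case=> [CA|cl].
  by left; exact: isoC hAB CA.
right=> x'; case: hAB => f [fb fadj]; case: (fb) => g fK gK.
apply: (clause_iso isoC IH _ (cl (g x'))).
rewrite -{2}(gK x'); exact: iso_comp.
Qed.

Lemma ed_iso C d : iso_closed C ->
  forall A B, isomorphic A B -> ed_le C d A -> ed_le C d B.
Proof.
move=> isoC; elim: d => [|d IH]; apply: ed_iso_step => //.
by move=> d' [<-].
Qed.

Lemma clause_embed C d (K M : sgraph) (f : K -> M) (y : K) :
  iso_closed C -> robust C ->
  (forall a b, connect (@adj K) y a -> connect (@adj K) y b -> f a = f b -> a = b) ->
  (forall a b, connect (@adj K) y a -> connect (@adj K) y b -> adj (f a) (f b) = adj a b) ->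
  (forall a b, connect (@adj K) y a -> adj (f a) b -> exists2 a', adj a a' & b = f a') ->
  ed_le C d M -> clause C d y.
Proof.
move=> isoC robC E1 E2 E3 /ed_leE edM.
have hiso := iso_sym (comp_embed E1 E2 E3).
case: edM => [CM|cl].
  left; apply: isoC hiso _. exact: (proj1 (robC M) CM).
apply: clause_iso hiso (cl (f y)) => //.
move=> d' _; exact: ed_iso.
Qed.

Lemma ed_mono C d G : ed_le C d G -> ed_le C d.+1 G.
Proof.
elim: d G => [|d IH] G [CG|H]; try by left.
  by right=> x; case: (H x) => // ?; left.
right=> x; case: (H x) => [?|[v ?]]; [left | right; exists v; exact: IH] => //.
Qed.

Definition opt (G : sgraph) (o : nat) :=
  (exists S : {set G}, vertex_cover S /\ #|S| = o) /\
  forall S : {set G}, vertex_cover S -> o <= #|S|.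

Lemma vcP (G : sgraph) (S : {set G}) :
  reflect (vertex_cover S) [forall x, forall y, adj x y ==> (x \in S) || (y \in S)].
Proof.
apply: (iffP forallP) => [H x y a | H x].
  by move/forallP: (H x) => /(_ y); rewrite a.
by apply/forallP => y; apply/implyP; exact: H.
Qed.

Lemma opt_exists G : exists o, opt G o.
Proof.
pose P n := [exists S : {set G}, [forall x, forall y, adj x y ==> (x \in S) || (y \in S)] && (#|S| == n)].
have ex : exists n, P n.
  exists #|[set: G]|; apply/existsP; exists setT; rewrite eqxx andbT.
  by apply/vcP => x y _; rewrite inE.
case: (ex_minnP ex) => o /existsP [S /andP[/vcP vS /eqP cS]] omin.
exists o; split; first by exists S.
move=> S' vS'; apply: omin; apply/existsP; exists S'; rewrite eqxx andbT.
exact/vcP.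
Qed.

Lemma vc_sup (G : sgraph) (S S' : {set G}) :
  vertex_cover S -> S \subset S' -> vertex_cover S'.
Proof.
move=> vS sub x y a; case/orP: (vS x y a) => h.
  by rewrite (subsetP sub _ h).
by rewrite (subsetP sub _ h) orbT.
Qed.

Lemma blockingE (G : sgraph) o (Y : {set G}) : opt G o ->
  blocking Y <-> forall S, vertex_cover S -> Y \subset S -> o < #|S|.
Proof.
move=> [[S0 [vS0 cS0]] omin]; split.
  move=> bl S vS YS; rewrite ltnNge; apply/negP => le; apply: (bl S) => //.
  by split => // S' vS'; exact: leq_trans le (omin _ vS').
move=> H S [vS minS] YS; have := H S vS YS.
by rewrite ltnNge -cS0 minS.
Qed.

Lemma minimal_blockingI (G : sgraph) o (Y : {set G}) : opt G o ->
  (forall S, vertex_cover S -> Y \subset S -> o < #|S|) ->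
  (forall z, z \in Y -> exists S, [/\ vertex_cover S, Y :\ z \subset S & #|S| <= o]) ->
  minimal_blocking Y.
Proof.
move=> op H1 H2; split; first by apply/(blockingE _ op).
move=> Z /properP [ZY [z zY zZ]] /(blockingE _ op) bZ.
have [S [vS sub le]] := H2 z zY.
have: o < #|S|.
  apply: (bZ S vS); apply: subset_trans sub; apply/subsetP => w wZ.
  rewrite !inE (subsetP ZY w wZ) andbT; apply/eqP => wz.
  by rewrite -wz wZ in zZ.
by rewrite ltnNge le.
Qed.

Lemma minimal_blockingE (G : sgraph) o (Y : {set G}) : opt G o -> minimal_blocking Y ->
  (forall S, vertex_cover S -> Y \subset S -> o < #|S|) /\
  (forall z, z \in Y -> exists S, [/\ vertex_cover S, Y :\ z \subset S & #|S| <= o]).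
Proof.
move=> op [bY mY]; split; first by apply/(blockingE _ op).
move=> z zY; apply: NNPP => H; apply: (mY _ (properD1 zY)) => S [vS minS] sub.
apply: H; exists S; split => //.
case: op => [[S0 [vS0 <-]] _]; exact: minS.
Qed.

Lemma mb_plus1 (G : sgraph) o (Y : {set G}) y : opt G o -> minimal_blocking Y -> y \in Y ->
  exists S, [/\ vertex_cover S, Y \subset S & #|S| <= o.+1].
Proof.
move=> op mb yY; have [_ H] := minimal_blockingE op mb.
have [S [vS sub le]] := H y yY.
exists (y |: S); split.
- by apply: vc_sup vS _; exact: subsetUr.
- apply/subsetP => w wY; rewrite !inE; case: eqP => //= wy.
  by apply: (subsetP sub); rewrite !inE wY andbT; apply/eqP.
- by rewrite cardsU1; case: (y \in S) => /=; [exact: leqW | ].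
Qed.

Definition dbl_adj (G : sgraph) : rel (G + G)%type := fun a b =>
  match a, b with inl x, inl y => adj x y | inr x, inr y => adj x y | _, _ => false end.
Lemma dbl_adj_sym G : symmetric (@dbl_adj G).
Proof. by case=> x [] y //=; rewrite adj_sym. Qed.
Lemma dbl_adj_irr G : irreflexive (@dbl_adj G).
Proof. by case=> x /=; rewrite adj_irr. Qed.
Definition double (G : sgraph) : sgraph := SGraph (@dbl_adj_sym G) (@dbl_adj_irr G).

Definition apex_adj (M : sgraph) (N : {set M}) : rel (option M) := fun a b =>
  match a, b with
  | Some x, Some y => adj x y
  | None, Some y => y \in N
  | Some x, None => x \in N
  | None, None => false end.
Lemma apex_adj_sym M N : symmetric (@apex_adj M N).
Proof. by case=> [x|] [y|] //=; rewrite adj_sym. Qed.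
Lemma apex_adj_irr M N : irreflexive (@apex_adj M N).
Proof. by case=> [x|] //=; rewrite adj_irr. Qed.
Definition apex (M : sgraph) (N : {set M}) : sgraph :=
  SGraph (@apex_adj_sym M N) (@apex_adj_irr M N).

Definition lproj (G : sgraph) (S : {set double G}) : {set G} := [set x | inl x \in S].
Definition rproj (G : sgraph) (S : {set double G}) : {set G} := [set x | inr x \in S].
Definition sset (G : sgraph) (A B : {set G}) : {set double G} :=
  [set x | match x with inl a => a \in A | inr b => b \in B end].

Lemma lproj_sset (G : sgraph) (A B : {set G}) : lproj (sset A B) = A.
Proof. by apply/setP => x; rewrite !inE. Qed.
Lemma rproj_sset (G : sgraph) (A B : {set G}) : rproj (sset A B) = B.
Proof. by apply/setP => x; rewrite !inE. Qed.

Lemma card_dbl (G : sgraph) (S : {set double G}) : #|S| = #|lproj S| + #|rproj S|.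
Proof.
have E: S = inl @: lproj S :|: inr @: rproj S.
  apply/setP => -[x|x]; rewrite !inE.
    by rewrite mem_imset; [rewrite inE orbC; case: imsetP => // -[]|move=> ? ? []].
  by rewrite (mem_imset _ _ (fun a b (e : inr a = inr b) => ltac:(by case: e))) inE;
     case: imsetP => // -[].
rewrite {1}E cardsU (_ : _ :&: _ = set0) ?cards0 ?subn0.
  rewrite !card_imset //; first by move=> ? ? [].
  by move=> ? ? [].
apply/setP => -[x|x]; rewrite !inE; apply/negP => /andP[/imsetP [y _ e1] /imsetP [z _ e2]];
  by rewrite e2 in e1.
Qed.

Lemma vc_dbl (G : sgraph) (S : {set double G}) :
  vertex_cover S -> vertex_cover (lproj S) /\ vertex_cover (rproj S).
Proof.
move=> vS; split => x y a; rewrite !inE.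
  exact: (vS (inl x) (inl y)).
exact: (vS (inr x) (inr y)).
Qed.

Lemma vc_sset (G : sgraph) (A B : {set G}) :
  vertex_cover A -> vertex_cover B -> vertex_cover (sset A B).
Proof.
move=> vA vB [x|x] [y|y] //= a; rewrite !inE; [exact: vA | exact: vB].
Qed.

Lemma card_sset (G : sgraph) (A B : {set G}) : #|sset A B| = #|A| + #|B|.
Proof. by rewrite card_dbl lproj_sset rproj_sset. Qed.

Definition oproj (M : sgraph) (N : {set M}) (S : {set apex N}) : {set M} :=
  [set x | Some x \in S].

Lemma Some_inj' (T : Type) : injective (@Some T).
Proof. by move=> ? ? []. Qed.

Lemma card_apex (M : sgraph) (N : {set M}) (S : {set apex N}) :
  #|S| = (None \in S) + #|oproj S|.
Proof.
rewrite (cardsD1 None) -(card_imset _ (@Some_inj' M)); congr (_ + _).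
apply: eq_card => -[x|]; rewrite !inE.
  by rewrite mem_imset ?inE //; exact: Some_inj'.
by apply/esym/imsetP => -[].
Qed.

Lemma vc_apex (M : sgraph) (N : {set M}) (S : {set apex N}) :
  vertex_cover S -> vertex_cover (oproj S) /\ (None \in S \/ N \subset oproj S).
Proof.
move=> vS; split.
  by move=> x y a; rewrite !inE; exact: (vS (Some x) (Some y)).
case: (boolP (None \in S)) => nS; [by left | right].
apply/subsetP => x xN; rewrite inE.
by have := vS None (Some x); rewrite /= xN (negbTE nS) => /(_ isT).
Qed.

Lemma oproj_some (M : sgraph) (N : {set M}) (T : {set M}) :
  oproj ([set Some x | x in T] : {set apex N}) = T.
Proof. by apply/setP => x; rewrite inE mem_imset //; exact: Some_inj'. Qed.

Lemma oproj_none (M : sgraph) (N : {set M}) (T : {set M}) :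
  oproj (None |: [set Some x | x in T] : {set apex N}) = T.
Proof. by apply/setP => x; rewrite !inE mem_imset //; exact: Some_inj'. Qed.

Lemma in_some (M : sgraph) (N : {set M}) (T : {set M}) x :
  (Some x \in ([set Some x | x in T] : {set apex N})) = (x \in T).
Proof. by apply: mem_imset; exact: Some_inj'. Qed.

Lemma none_notin (M : sgraph) (N : {set M}) (T : {set M}) :
  (None \in ([set Some x | x in T] : {set apex N})) = false.
Proof. by apply/imsetP => -[]. Qed.

Lemma card_some (M : sgraph) (N : {set M}) (T : {set M}) :
  #|([set Some x | x in T] : {set apex N})| = #|T|.
Proof. by rewrite card_imset //; exact: Some_inj'. Qed.

Lemma card_nsome (M : sgraph) (N : {set M}) (T : {set M}) :
  #|(None |: [set Some x | x in T] : {set apex N})| = #|T|.+1.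
Proof. by rewrite card_apex oproj_none !inE. Qed.

Lemma vcA1 (M : sgraph) (N : {set M}) (T : {set M}) :
  vertex_cover T -> vertex_cover (None |: [set Some x | x in T] : {set apex N}).
Proof.
move=> vT [x|] [y|] //= a; rewrite !inE ?orbT //= !(@in_some M N T).
by case/orP: (vT x y a) => ->; rewrite ?orbT.
Qed.

Lemma vcA2 (M : sgraph) (N : {set M}) (T : {set M}) :
  vertex_cover T -> N \subset T -> vertex_cover ([set Some x | x in T] : {set apex N}).
Proof.
move=> vT NT [x|] [y|] //= a; rewrite ?(@in_some M N T) //.
- exact: vT.
- by rewrite (subsetP NT _ a).
- by rewrite (subsetP NT _ a) orbT.
Qed.

Lemma apex_opt (M : sgraph) (N : {set M}) oM : opt M oM ->
  (forall T, vertex_cover T -> N \subset T -> oM < #|T|) -> opt (apex N) oM.+1.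
Proof.
move=> [[T0 [vT0 cT0]] omin] H1; split.
  by exists (None |: [set Some x | x in T0]); split; [exact: vcA1 | rewrite card_nsome cT0].
move=> S vS; case: (vc_apex vS) => vT [nS|NT]; rewrite card_apex.
  by rewrite nS add1n ltnS; exact: omin.
exact: leq_trans (H1 _ vT NT) (leq_addl _ _).
Qed.

Lemma some_sub (M : sgraph) (N : {set M}) (Z : {set M}) (S : {set apex N}) :
  [set Some x | x in Z] \subset S -> Z \subset oproj S.
Proof.
move=> sub; apply/subsetP => z zZ; rewrite inE; apply: (subsetP sub).
by rewrite (@in_some M N).
Qed.

Lemma apex_mb_noNone (M : sgraph) (N : {set M}) oM (Z : {set M}) : opt M oM ->
  (forall T, vertex_cover T -> N \subset T -> oM < #|T|) ->
  (forall T, vertex_cover T -> Z \subset T -> oM < #|T|) ->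
  (forall T, vertex_cover T -> N :|: Z \subset T -> oM.+1 < #|T|) ->
  (forall z, z \in Z ->
     (exists T, [/\ vertex_cover T, Z :\ z \subset T & #|T| <= oM]) \/
     (exists T, [/\ vertex_cover T, N :|: (Z :\ z) \subset T & #|T| <= oM.+1])) ->
  minimal_blocking ([set Some x | x in Z] : {set apex N}).
Proof.
move=> op H1 A1 A2 Min; apply: (minimal_blockingI (apex_opt op H1)).
  move=> S vS /some_sub ZT; case: (vc_apex vS) => vT [nS|NT]; rewrite card_apex.
    by rewrite nS add1n ltnS; exact: A1.
  apply: leq_trans (leq_addl _ _); apply: A2 => //.
  by rewrite subUset NT ZT.
move=> z /imsetP [z0 z0Z ->].
case: (Min z0 z0Z) => [[T [vT sub le]]|[T [vT sub le]]].
  exists (None |: [set Some x | x in T]); split.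
  - exact: vcA1.
  - apply/subsetP => w; rewrite !inE => /andP[wz /imsetP[x xZ wx]]; subst w.
    rewrite (@in_some M N); suff xT: x \in T by rewrite xT ?orbT.
    apply: (subsetP sub); rewrite !inE xZ andbT.
    by apply: contra wz => /eqP ->.
  - by rewrite card_nsome.
move: sub; rewrite subUset => /andP [NT sub].
exists [set Some x | x in T]; split.
- exact: vcA2.
- apply/subsetP => w; rewrite !inE => /andP[wz /imsetP[x xZ wx]]; subst w.
  rewrite (@in_some M N); apply: (subsetP sub); rewrite !inE xZ andbT.
  by apply: contra wz => /eqP ->.
- by rewrite card_some.
Qed.

Lemma apex_mb_None (M : sgraph) (N : {set M}) oM (Z : {set M}) : opt M oM ->
  (forall T, vertex_cover T -> N \subset T -> oM < #|T|) ->
  (forall T, vertex_cover T -> Z \subset T -> oM < #|T|) ->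
  (exists T, [/\ vertex_cover T, N :|: Z \subset T & #|T| <= oM.+1]) ->
  (forall z, z \in Z -> exists T, [/\ vertex_cover T, Z :\ z \subset T & #|T| <= oM]) ->
  minimal_blocking (None |: [set Some x | x in Z] : {set apex N}).
Proof.
move=> op H1 A1 Top Min; apply: (minimal_blockingI (apex_opt op H1)).
  move=> S vS; rewrite subUset sub1set => /andP[nS /some_sub ZT].
  by rewrite card_apex nS add1n ltnS; apply: A1 => //; case: (vc_apex vS).
move=> z; rewrite in_setU1 => /orP[/eqP ->| /imsetP [z0 z0Z ->]].
  case: Top => T [vT sub le]; move: sub; rewrite subUset => /andP [NT sub].
  exists [set Some x | x in T]; split.
  - exact: vcA2.
  - apply/subsetP => w; rewrite !inE => /andP[wz /orP[/eqP wN|/imsetP[x xZ ->]]].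
      by rewrite wN eqxx in wz.
    by rewrite (@in_some M N); apply: (subsetP sub).
  - by rewrite card_some.
case: (Min z0 z0Z) => T [vT sub le].
exists (None |: [set Some x | x in T]); split.
- exact: vcA1.
- apply/subsetP => w; rewrite !inE => /andP[wz /orP[->//|/imsetP[x xZ wx]]]; subst w.
  rewrite (@in_some M N); suff xT: x \in T by rewrite xT ?orbT.
  apply: (subsetP sub); rewrite !inE xZ andbT.
  by apply: contra wz => /eqP ->.
- by rewrite card_nsome.
Qed.

Definition isl (G : sgraph) (a : double G) : bool := if a is inl _ then true else false.
Definition dproj (G : sgraph) (a : double G) : G := match a with inl x => x | inr x => x end.

Lemma dbl_side (G : sgraph) (y a : double G) :
  connect (@adj (double G)) y a -> isl a = isl y.
Proof.
apply: (@connect_ind' _ _ y (fun a => isl a = isl y)) => // a0 b _ <-.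
by case: a0 => ?; case: b => ?.
Qed.

Lemma ed_double C d (G : sgraph) : iso_closed C -> robust C ->
  ed_le C d G -> ed_le C d (double G).
Proof.
move=> isoC robC edG; apply/ed_leE; right => y.
apply: (@clause_embed C d _ G (@dproj G) y isoC robC _ _ _ edG).
- move=> a b /dbl_side ha /dbl_side hb; have: isl a = isl b by rewrite ha hb.
  by case: a {ha} => x; case: b {hb} => z //= _ ->.
- move=> a b /dbl_side ha /dbl_side hb; have: isl a = isl b by rewrite ha hb.
  by case: a {ha} => x; case: b {hb} => z.
- by move=> a b _; case: a => x ab; [exists (inl b) | exists (inr b)].
Qed.

Lemma ed_apex C d (M : sgraph) (N : {set M}) : iso_closed C -> robust C ->
  ed_le C d M -> ed_le C d.+1 (apex N).
Proof.
move=> isoC robC edM; apply/ed_leE; right => x.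
case: (boolP (connect (@adj (apex N)) x None)) => cxN.
  right.
  have uin : None \in [set y | connect (@adj (apex N)) x y] by rewrite inE.
  pose u : component x := exist _ None uin.
  exists u; apply/ed_leE; right => y.
  have vy: forall z : delv u, val (val z) != None.
    move=> z; have := valP z; rewrite in_setC1; apply: contra => /eqP e.
    by apply/eqP; apply: val_inj; rewrite e.
  case ey: (val (val y)) => [m0|]; last by have := vy y; rewrite ey.
  pose f (z : delv u) : M := odflt m0 (val (val z)).
  have fE: forall z, val (val z) = Some (f z).
    by move=> z; move: (vy z); rewrite /f; case: (val (val z)).
  apply: (@clause_embed C d _ M f y isoC robC _ _ _ edM).
  - move=> a b _ _ fab; apply: val_inj; apply: val_inj; by rewrite !fE fab.
  - by move=> a b _ _; rewrite /= /ind_adj /= !fE.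
  - move=> a b _ ab.
    have cb : Some b \in [set y0 | connect (@adj (apex N)) x y0].
      rewrite inE; apply: (@connect_trans _ _ (val (val a))).
        by have := valP (val a); rewrite inE.
      by apply: connect1; rewrite fE.
    pose b1 : component x := exist _ (Some b) cb.
    have b1u : b1 \in [set~ u] by rewrite in_setC1; apply/eqP => /(congr1 val).
    exists (exist _ b1 b1u); last by [].
    by rewrite /= /ind_adj /= fE.
case: x cxN => [m0|] cxN; last by rewrite connect0 in cxN.
pose f (a : apex N) : M := odflt m0 a.
have nN: forall a, connect (@adj (apex N)) (Some m0) a -> a != None.
  by move=> a ca; apply: contra cxN => /eqP <-.
apply: (@clause_embed C d.+1 _ M f (Some m0) isoC robC _ _ _ (ed_mono edM)).
- move=> a b ca cb; move: (nN a ca) (nN b cb).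
  by case: a {ca} => // a; case: b {cb} => // b _ _ /= ->.
- move=> a b ca cb; move: (nN a ca) (nN b cb).
  by case: a {ca} => // a; case: b {cb} => // b.
- move=> a b ca ab; exists (Some b) => //; move: (nN a ca) ab.
  by case: a {ca}.
Qed.

Lemma plus_one C d (G : sgraph) (Y : {set G}) : iso_closed C -> robust C ->
  ed_le C d G -> minimal_blocking Y -> 0 < #|Y| ->
  exists (G' : sgraph) (Y' : {set G'}),
    [/\ ed_le C d.+1 G', minimal_blocking Y' & #|Y'| = #|Y|.+1].
Proof.
move=> isoC robC edG mb /card_gt0P [y0 y0Y].
have [o op] := opt_exists G; have [MB1 MB2] := minimal_blockingE op mb.
exists (apex Y), (None |: [set Some x | x in Y]); split.
- exact: ed_apex.
- apply: (apex_mb_None op MB1 MB1) => //.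
  have [S [vS sub le]] := mb_plus1 op mb y0Y; exists S; split => //.
  by rewrite setUid.
- by rewrite card_nsome.
Qed.

Lemma sub_sset (G : sgraph) (A B : {set G}) (T : {set double G}) :
  sset A B \subset T -> A \subset lproj T /\ B \subset rproj T.
Proof.
by move=> h; split; apply/subsetP => x xA; rewrite inE; apply: (subsetP h); rewrite inE.
Qed.

Lemma sset_U (G : sgraph) (A B A' B' : {set G}) :
  sset A B :|: sset A' B' = sset (A :|: A') (B :|: B').
Proof. by apply/setP => -[x|x]; rewrite !inE. Qed.

Lemma doubling C d (G : sgraph) (Y : {set G}) : iso_closed C -> robust C ->
  ed_le C d G -> minimal_blocking Y -> 0 < #|Y| ->
  exists (G' : sgraph) (Y' : {set G'}),
    [/\ ed_le C d.+1 G', minimal_blocking Y' & #|Y'| = (#|Y| + #|Y|).-1].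
Proof.
move=> isoC robC edG mb /card_gt0P [y0 y0Y].
have [o op] := opt_exists G; have [MB1 MB2] := minimal_blockingE op mb.
have omin := proj2 op.
have opM : opt (double G) (o + o).
  case: op => [[S0 [vS0 cS0]] _]; split.
    by exists (sset S0 S0); split; [exact: vc_sset | rewrite card_sset cS0].
  move=> S vS; case: (vc_dbl vS) => vl vr; rewrite card_dbl.
  by apply: leq_add; apply: omin.
pose N := sset Y [set y0]; pose Z := sset Y (Y :\ y0).
have lowY : forall T : {set double G}, vertex_cover T -> Y \subset lproj T -> o + o < #|T|.
  move=> T vT YT; case: (vc_dbl vT) => vl vr; rewrite card_dbl -addSn.
  by apply: leq_add; [exact: MB1 | exact: omin].
exists (apex N), [set Some x | x in Z]; split.
- by apply: ed_apex => //; exact: ed_double.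
- apply: (apex_mb_noNone opM).
  + by move=> T vT /sub_sset [YT _]; exact: lowY.
  + by move=> T vT /sub_sset [YT _]; exact: lowY.
  + move=> T vT; rewrite sset_U setUid setD1K // => /sub_sset [YT YT'].
    case: (vc_dbl vT) => vl vr; rewrite card_dbl -addSn -addnS.
    by apply: leq_add; exact: MB1.
  + move=> [y|y]; rewrite inE => yin.
      left; have [Sy [vSy suby ley]] := MB2 y yin.
      have [S0 [vS0 sub0 le0]] := MB2 y0 y0Y.
      exists (sset Sy S0); split.
      * exact: vc_sset.
      * apply/subsetP => -[a|a]; rewrite /Z !inE /= => /andP [ay aY].
          apply: (subsetP suby); rewrite !inE aY andbT.
          by apply: contra ay => /eqP ->.
        by apply: (subsetP sub0); rewrite !inE ay.
      * by rewrite card_sset; apply: leq_add.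
    right; move: yin; rewrite !inE => /andP [yy0 yY].
    have [Sy [vSy suby ley]] := MB2 y yY.
    have [S0 [vS0 sub0 le0]] := MB2 y0 y0Y.
    exists (sset (y0 |: S0) Sy); split.
    * exact: vc_sset (vc_sup vS0 (subsetUr _ _)) vSy.
    * apply/subsetP => -[a|a]; rewrite /N /Z !inE /=.
        rewrite orbb => aY; case: (a =P y0) => //= ay0.
        by apply: (subsetP sub0); rewrite !inE aY andbT; apply/eqP.
      case/orP => [/eqP ->|/and3P [ay ay0 aY]].
        by apply: (subsetP suby); rewrite !inE y0Y andbT eq_sym.
      apply: (subsetP suby); rewrite !inE aY andbT.
      by apply: contra ay => /eqP ->.
    * rewrite card_sset -addSn; apply: leq_add => //.
      rewrite cardsU1 -add1n; apply: leq_add => //; exact: leq_b1.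
- rewrite card_some card_sset (cardsD1 y0 Y) y0Y.
  by move: #|Y :\ y0| => n; rewrite /= add1n addSn addnS.
Qed.

From mathcomp Require Import zify.

Theorem mainTheorem5 (C : graph_class) (k : nat) :
  iso_closed C -> robust C -> beta_class_eq C k -> 1 <= k ->
  forall d : nat, 1 <= d ->
  exists G : sgraph, ed_le C d G /\
    exists Y : {set vert G}, minimal_blocking Y /\
      (if k == 1 then 2 ^ d.-1 + 1 else (k - 1) * 2 ^ d + 1) <= #|Y|.
Proof.
move=> isoC robC [_ [H [CH [Y0 [mb0 cY0]]]]] k1 d d1.
have edH : ed_le C 0 H by left.
case: eqP => [k1e|kn1].
  suff: forall n, exists G : sgraph, ed_le C n.+1 G /\
      exists Y : {set G}, minimal_blocking Y /\ 2 ^ n + 1 <= #|Y|.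
    by case: d d1 => // d _; apply.
  elim=> [|n [G [edG [Y [mbY cY]]]]].
    have [G' [Y' [ed' mb' c']]] := plus_one isoC robC edH mb0 (ltac:(by rewrite cY0)).
    exists G'; split => //; exists Y'; split => //; by rewrite c' cY0 k1e.
  have Ypos : 0 < #|Y| by apply: leq_trans cY; rewrite addn1.
  have [G' [Y' [ed' mb' c']]] := doubling isoC robC edG mbY Ypos.
  exists G'; split => //; exists Y'; split => //; rewrite c' expnS.
  move: cY; move: (2 ^ n) #|Y| => a b; lia.
suff: forall n, exists G : sgraph, ed_le C n G /\
    exists Y : {set G}, minimal_blocking Y /\ (k - 1) * 2 ^ n + 1 <= #|Y|.
  by apply.
elim=> [|n [G [edG [Y [mbY cY]]]]].
  exists H; split => //; exists Y0; split => //; rewrite cY0 expn0 muln1; lia.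
have Ypos : 0 < #|Y| by apply: leq_trans cY; rewrite addn1.
have [G' [Y' [ed' mb' c']]] := doubling isoC robC edG mbY Ypos.
exists G'; split => //; exists Y'; split => //; rewrite c' expnS mulnCA.
move: cY; move: ((k - 1) * 2 ^ n) #|Y| => a b; lia.
Qed.
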